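(* For unrestricted (arbitrary nonnegative) valuation functions in one-sided matching with $n$ agents and $n$ items, every deterministic matching algorithm that makes at most $k\ge1$ value queries per agent has distortion $\Omega\!\left(\frac1k n^{1/k}\right)$. This holds even on instances in which all agents have the same ranking of the items.
   Context: One-sided matching: there is a set $N$ of $n$ agents and a set $A$ of $n$ items. Each agent $i$ has a valuation function $v_i:A\to\mathbb{R}_{\ge0}$. A deterministic matching algorithm making $k$ queries per agent receives the profile of strict rankings $\succ_i$ consistent with the values (if $a\succ_i b$ then $v_i(a)\ge v_i(b)$). It adaptively makes value queries $(i,j)\mapsto v_i(j)$, at most $k$ per agent, and outputs a bijection $Y:N\to A$. Its distortion is the supremum over valuation profiles of $\max_Z\sum_i v_i(z_i)/\sum_i v_i(y_i)$. *)

(* Defs.v *)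
From HB Require Import structures.
From mathcomp Require Import all_boot all_order all_algebra all_fingroup.
From mathcomp Require Import reals exp.
Set Implicit Arguments. Unset Strict Implicit. Unset Printing Implicit Defensive.
Import Order.TTheory GRing.Theory Num.Theory.
Local Open Scope ring_scope.

Section Matching.
Variables (n : nat) (R : realType).

(* Agents and items are both 'I_n. A valuation profile: v i j = value of agent i for item j. *)
Definition valuation := 'I_n -> 'I_n -> R.

Definition nonneg_val (v : valuation) : Prop := forall i j, 0 <= v i j.

(* A strict ranking of the items: r j is the position of item j (0 = most preferred). *)
Definition ranking := {perm 'I_n}.

Definition consistent (r : ranking) (vi : 'I_n -> R) : Prop :=
  forall a b : 'I_n, (r a < r b)%N -> vi b <= vi a.

Definition profile_consistent (P : 'I_n -> ranking) (v : valuation) : Prop :=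
  forall i, consistent (P i) (v i).

Definition matching := {perm 'I_n}.

Definition welfare (v : valuation) (Y : matching) : R := \sum_(i < n) v i (Y i).

Definition opt (v : valuation) : R := \big[Num.max/0]_(Z : matching) welfare v Z.

(* Deterministic adaptive query procedure (decision tree): either output a
   matching, or query the value v i j and continue depending on the answer. *)
Inductive qtree : Type :=
| Out of matching
| Ask of 'I_n & 'I_n & (R -> qtree).

Fixpoint run (v : valuation) (t : qtree) : matching * seq ('I_n * 'I_n) :=
  match t with
  | Out Y => (Y, [::])
  | Ask i j c => let r := run v (c (v i j)) in (r.1, (i, j) :: r.2)
  end.

Definition algorithm := (('I_n -> ranking) -> qtree).

Definition k_query (k : nat) (A : algorithm) : Prop :=
  forall (P : 'I_n -> ranking) (v : valuation),
    nonneg_val v -> profile_consistent P v ->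
    forall i : 'I_n, (count (fun q => q.1 == i) (run v (A P)).2 <= k)%N.

Definition output (A : algorithm) (P : 'I_n -> ranking) (v : valuation) : matching :=
  (run v (A P)).1.

End Matching.

(* Main.v *)
Require Import Defs.
From HB Require Import structures.
From mathcomp Require Import all_boot all_order all_algebra all_fingroup.
From mathcomp Require Import reals exp.
From mathcomp Require Import zify ring lra.
Import Order.TTheory GRing.Theory Num.Theory.
Local Open Scope ring_scope.

Lemma run_agree n (R : realType) (v v0 : valuation n R) t :
  (forall q, q \in (run v0 t).2 -> v q.1 q.2 = v0 q.1 q.2) -> run v t = run v0 t.
Proof.
elim: t => [Y|i j c IH] //= H.
have e : v i j = v0 i j by apply: (H (i, j)); rewrite inE eqxx.
rewrite e IH // => q Hq; apply: H; by rewrite inE Hq orbT.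
Qed.

Lemma sum_lt n T : (\sum_(j < n) (j < T : nat))%N = minn T n.
Proof.
elim: n => [|n IH]; first by rewrite big_ord0; lia.
rewrite big_ord_recr /= IH; case: ltnP => H; lia.
Qed.

Lemma sum_eq K (p : nat) : (\sum_(q < K) ((q : nat) == p : nat))%N = (p < K)%N.
Proof.
elim: K => [|K IH]; first by rewrite big_ord0.
rewrite big_ord_recr /= IH; case: (ssrnat.ltngtP p K) => H; try lia.
Qed.

Lemma sum_ltR (R : realType) n T : (T <= n)%N ->
  \sum_(j < n) ((j < T)%N%:R : R) = T%:R.
Proof. by move=> H; rewrite -natr_sum sum_lt; congr (_%:R); lia. Qed.

Lemma opt_ge n (R : realType) (v : valuation n R) Z : welfare v Z <= opt v.
Proof. exact: (le_bigmax 0 (fun Z => welfare v Z) Z). Qed.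

Lemma opt_avg n (R : realType) (v : valuation n R) :
  \sum_(i < n) \sum_(j < n) v i j <= n%:R * opt v.
Proof.
case: n v => [|m] v; first by rewrite big_ord0 mul0r.
have E : forall i : 'I_m.+1, \sum_(j < m.+1) v i j = \sum_(s < m.+1) v i (s + i)%R.
  by move=> i; rewrite (reindex_inj (addIr i)).
under eq_bigr do rewrite E.
rewrite exchange_big /=.
rewrite mulr_natl (_ : opt v *+ m.+1 = \sum_(s < m.+1) opt v); last by rewrite sumr_const card_ord.
apply: ler_sum => s _.
have := @opt_ge _ _ v (perm (addrI s)).
rewrite /welfare => H; apply: le_trans H; apply: ler_sum => i _; by rewrite permE.
Qed.
Definition Tt (r : nat) (raise : option nat) (q : nat) : nat :=
  if raise == Some q.+1 then (r ^ q.+1)%N else (r ^ q)%N.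
Definition Ee (raise : option nat) : nat := if raise == Some 0%N then 1%N else 0%N.
Definition vv (R : realType) (k r : nat) (raise : option nat) (j : nat) : R :=
  \sum_(q < k.+1) ((j < Tt r raise q)%N%:R * (r%:R ^- q))
  + (j < Ee raise)%N%:R * (r%:R - 1).
Definition inreg (r p j : nat) : bool :=
  ((if p is p'.+1 then r ^ p' else 0) <= j < r ^ p)%N.
Definition okr k (raise : option nat) : bool :=
  if raise is Some p then (p <= k)%N else true.

Lemma vv_ge0 (R : realType) k r raise j : (1 <= r)%N -> 0 <= vv R k r raise j.
Proof.
move=> r1; have r1R : 1 <= (r%:R : R) by rewrite ler1n.
apply: addr_ge0; last by apply: mulr_ge0 => //; rewrite subr_ge0.
apply: sumr_ge0 => q _; apply: mulr_ge0 => //.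
by rewrite invr_ge0 exprn_ge0 // (le_trans ler01).
Qed.

Lemma vv_mono (R : realType) k r raise a b : (1 <= r)%N -> (a <= b)%N ->
  vv R k r raise b <= vv R k r raise a.
Proof.
move=> r1 ab; have r1R : 1 <= (r%:R : R) by rewrite ler1n.
apply: lerD; last first.
  apply: ler_wpM2r; first by rewrite subr_ge0.
  by rewrite ler_nat; case: ltnP => // H; case: ltnP => //; lia.
apply: ler_sum => q _; apply: ler_wpM2r.
  by rewrite invr_ge0 exprn_ge0 // (le_trans ler01).
by rewrite ler_nat; case: ltnP => // H; case: ltnP => //; lia.
Qed.

Lemma vv_off (R : realType) k r p j : (1 <= r)%N -> ~~ inreg r p j ->
  vv R k r (Some p) j = vv R k r None j.
Proof.
move=> r1; rewrite /inreg /vv /Ee /Tt => Hj; congr (_ + _).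
  apply: eq_bigr => q _; congr (_%:R * _).
  case: eqP => //= [[e]]; subst p.
  have : (r ^ q <= r ^ q.+1)%N by rewrite leq_pexp2l.
  move: Hj; rewrite negb_and -leqNgt -ltnNge; case/orP => H H2; lia.
case: p Hj => [|p] //= Hj; rewrite expn0 in Hj; congr (_%:R * _); lia.
Qed.

Lemma vv_top (R : realType) k r raise j : (1 <= r)%N -> okr k raise ->
  (r ^ k <= j)%N -> vv R k r raise j = 0.
Proof.
move=> r1 ok Hj; rewrite /vv /Ee /Tt.
have E1 : (j < (if raise == Some 0%N then 1 else 0))%N = false.
  have : (1 <= r ^ k)%N by rewrite expn_gt0 r1.
  by case: ifP => _ H; lia.
rewrite E1 mul0r addr0; apply: big1 => q _.
suff -> : (j < (if raise == Some q.+1 then r ^ q.+1 else r ^ q))%N = false by rewrite mul0r.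
case: ifP => [/eqP e|_].
  move: ok; rewrite e /= => qk.
  have : (r ^ q.+1 <= r ^ k)%N by rewrite leq_pexp2l.
  lia.
have : (r ^ q <= r ^ k)%N by rewrite leq_pexp2l // -ltnS.
lia.
Qed.

Lemma vv_sum (R : realType) n k r raise : (1 <= r)%N -> (r ^ k <= n)%N -> okr k raise ->
  \sum_(j < n) vv R k r raise j = (k.+1)%:R + (raise != None)%:R * (r%:R - 1).
Proof.
move=> r1 rk ok.
have r0 : (r%:R : R) != 0 by rewrite pnatr_eq0 -lt0n.
rewrite /vv big_split /= exchange_big /=.
rewrite -big_distrl /= sum_ltR; last by rewrite /Ee; case: ifP; lia.
have E : forall q : 'I_k.+1, \sum_(j < n) ((j < Tt r raise q)%N%:R * (r%:R ^- q) : R)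
   = 1 + ((raise == Some q.+1)%:R * (r%:R - 1)).
  move=> q; rewrite -big_distrl /= sum_ltR; last first.
    rewrite /Tt; case: ifP => [/eqP e|_].
      move: ok; rewrite e /= => qk; apply: leq_trans rk; by rewrite leq_pexp2l.
    apply: leq_trans rk; rewrite leq_pexp2l //; by case: q.
  rewrite /Tt; case: ifP => _; rewrite natrX.
    by rewrite exprS -mulrA mulfV ?expf_neq0 // mulr1 mul1r addrC subrK.
  by rewrite mulfV ?expf_neq0 // mul0r addr0.
under eq_bigr do rewrite E.
rewrite big_split /= sumr_const card_ord -big_distrl /=.
have -> : (Ee raise)%:R * (r%:R - 1) = (raise == Some 0%N)%:R * (r%:R - 1) :> R.
  by rewrite /Ee; case: ifP.
rewrite -addrA -mulrDl; congr (_ + _ * _).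
clear E; case: raise ok => [p|] /= ok; last first.
  by rewrite big1 ?addr0 // => q _.
case: p ok => [|p] ok /=.
  by rewrite big1 ?add0r // => q _.
rewrite addr0 -natr_sum.
rewrite (eq_bigr (fun q : 'I_k.+1 => (((q : nat) == p) : nat))); last first.
  move=> q _; congr (nat_of_bool _); by apply/eqP/eqP => [[]|->].
by rewrite sum_eq; congr _%:R; lia.
Qed.

Lemma inreg_inj r p p' j : (1 <= r)%N -> inreg r p j -> inreg r p' j -> p = p'.
Proof.
move=> r1.
wlog: p p' / (p <= p')%N.
  move=> W H1 H2; case: (leqP p p') => H; first exact: W.
  by apply/esym/W => //; apply: ltnW.
move=> le; rewrite leq_eqVlt in le; case/orP: le => [/eqP //|lt].
case: p' lt => [//|p'] lt; rewrite /inreg.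
have : (r ^ p <= r ^ p')%N by rewrite leq_pexp2l.
move=> H /andP [_ H1] /andP [H2 _]; lia.
Qed.

Lemma pigeon n k r (Q : seq ('I_n * 'I_n)) (i : 'I_n) : (1 <= r)%N ->
  (count (fun q => q.1 == i) Q <= k)%N ->
  exists p : 'I_k.+1, ~~ has (fun q : 'I_n * 'I_n => (q.1 == i) && inreg r p q.2) Q.
Proof.
move=> r1 cnt.
case: (boolP [exists p : 'I_k.+1, ~~ has (fun q : 'I_n * 'I_n => (q.1 == i) && inreg r p q.2) Q]).
  by move/existsP.
rewrite negb_exists => /forallP H.
have Hp : forall p : 'I_k.+1, has (fun q : 'I_n * 'I_n => (q.1 == i) && inreg r p q.2) Q.
  by move=> p; move: (H p); rewrite negbK.
pose f (p : 'I_k.+1) := nth (i, i) Q (find (fun q : 'I_n * 'I_n => (q.1 == i) && inreg r p q.2) Q).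
have fP : forall p, f p \in Q /\ ((f p).1 == i) && inreg r p (f p).2.
  move=> p; split; first by rewrite /f mem_nth // -has_find Hp.
  exact: (nth_find _ (Hp p)).
have finj : injective f.
  move=> p p' e; apply: ord_inj; apply: (@inreg_inj r p p' (f p).2 r1).
    by case/andP: (fP p).2.
  by rewrite e; case/andP: (fP p').2.
have : (#|image f 'I_k.+1| <= #|[seq q <- Q | q.1 == i]|)%N.
  apply: subset_leq_card; apply/subsetP => q /imageP [p _ ->].
  rewrite mem_filter; case: (fP p) => H1 /andP [H2 _]; by rewrite H2.
rewrite card_image // card_ord => H1.
have := card_size [seq q <- Q | q.1 == i]; rewrite size_filter => H2. by have := leq_trans (leq_trans H1 H2) cnt; rewrite ltnn.
Qed.

Lemma root_bound (R : realType) n k r : (1 <= k)%N -> (n < (2 * r.+1) ^ k)%N ->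
  n%:R `^ (k%:R)^-1 < (2 * r.+1)%:R :> R.
Proof.
move=> k1 H.
have k0 : (k%:R : R) != 0 by rewrite pnatr_eq0 -lt0n.
have ak : (n%:R `^ (k%:R)^-1) ^+ k = n%:R :> R.
  by rewrite -powR_mulrn ?powR_ge0 // -powRrM mulVf // powRr1.
rewrite -(ltr_pXn2r (n:=k)) // ?nnegrE ?powR_ge0 //.
by rewrite ak -natrX ltr_nat.
Qed.

Lemma r_exists n k : (1 <= k)%N -> (2 <= n)%N ->
  exists r, [/\ (1 <= r)%N, (2 * r ^ k <= n)%N & (n < 2 * r.+1 ^ k)%N].
Proof.
move=> k1 n2.
have exP : exists x, (2 * x ^ k <= n)%N by exists 0%N; rewrite exp0n //; lia.
have ubP : forall x, (2 * x ^ k <= n)%N -> (x <= n)%N.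
  move=> x Hx; case: x Hx => // x Hx.
  have : (x.+1 <= x.+1 ^ k)%N.
    by rewrite -{1}(expn1 x.+1) leq_pexp2l.
  lia.
case: (ex_maxnP exP ubP) => r Hr Hmax.
exists r; split => //.
  apply: Hmax; rewrite exp1n; lia.
rewrite ltnNge; apply/negP => H; have := Hmax _ H; lia.
Qed.

Theorem theorem5 (R : realType) :
  exists c : R, 0 < c /\
  exists N : nat, forall k n : nat, (1 <= k)%N -> (N <= n)%N ->
  forall A : algorithm n R, k_query k A ->
  exists sigma : ranking n,
  exists v : valuation n R,
    [/\ nonneg_val v,
        profile_consistent (fun _ => sigma) v,
        0 < opt v &
        c * (n%:R `^ (k%:R)^-1) / k%:R * welfare v (output A (fun _ => sigma) v)
          <= opt v].
Proof.
exists (1/32); split; first by lra.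
exists 2%N => k n k1 n2 A HA.
have [r [r1 Hrk Hrn]] := @r_exists n k k1 n2.
have rkn : (r ^ k <= n)%N by lia.
exists 1%g.
pose P := fun _ : 'I_n => (1%g : ranking n).
pose v0 : valuation n R := fun _ j => vv R k r None j.
have v0nn : nonneg_val v0 by move=> i j; exact: vv_ge0.
have v0c : profile_consistent P v0.
  move=> i a b; rewrite /P !perm1 => ab; apply: vv_mono => //; exact: ltnW.
have cnt := HA P v0 v0nn v0c.
set Q0 := (run v0 (A P)).2 in cnt.
set Y0 := (run v0 (A P)).1.
pose raise (i : 'I_n) : option nat :=
  if (r ^ k <= Y0 i)%N then
    omap (@nat_of_ord _) [pick p : 'I_k.+1 | ~~ has (fun q : 'I_n * 'I_n => (q.1 == i) && inreg r p q.2) Q0]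
  else None.
pose v : valuation n R := fun i j => vv R k r (raise i) j.
have ok : forall i, okr k (raise i).
  move=> i; rewrite /raise; case: ifP => // _; case: pickP => //= p _.
  by rewrite -ltnS.
have rsome : forall i, (r ^ k <= Y0 i)%N -> raise i != None.
  move=> i H; rewrite /raise H; case: pickP => //= Hn.
  have [p Hp] := @pigeon n k r Q0 i r1 (cnt i).
  by move: (Hn p); rewrite Hp.
have agree : forall q, q \in Q0 -> v q.1 q.2 = v0 q.1 q.2.
  move=> q Hq; rewrite /v /v0 /raise; case: ifP => // _.
  case: pickP => //= p Hp; apply: vv_off => //.
  move/hasPn: Hp => /(_ q Hq); by rewrite eqxx.
have outE : output A P v = Y0 by rewrite /output (@run_agree n R v v0).

have vnn : nonneg_val v by move=> i j; exact: vv_ge0.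
have vc : profile_consistent P v.
  move=> i a b; rewrite /P !perm1 => ab; apply: vv_mono => //; exact: ltnW.
have re : forall F : 'I_n -> R, \sum_(i < n) F (Y0 i) = \sum_(j < n) F j.
  by move=> F; apply/esym/(reindex_inj (@perm_inj _ Y0)).
have wel : welfare v Y0 = (k.+1)%:R.
  rewrite /welfare.
  transitivity (\sum_(i < n) vv R k r None (Y0 i)).
    apply: eq_bigr => i _; rewrite /v.
    case: (boolP (r ^ k <= Y0 i)%N) => H.
      by rewrite !vv_top.
    by rewrite /raise (negbTE H).
  rewrite (re (fun j : 'I_n => vv R k r None j)).
  by rewrite vv_sum // /= mul0r addr0.
have sumv : \sum_(i < n) \sum_(j < n) v i j >=
    n%:R * (k.+1)%:R + (r%:R - 1) * \sum_(i < n) ((r ^ k <= Y0 i)%N%:R : R).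
  rewrite mulr_sumr mulr_natl (_ : _ *+ n = \sum_(i < n) (k.+1)%:R :> R); last by rewrite sumr_const card_ord.
  rewrite -big_split /=.
  apply: ler_sum => i _; rewrite /v vv_sum //.
  rewrite lerD2l mulrC; apply: ler_wpM2r; first by rewrite subr_ge0 ler1n.
  rewrite ler_nat; case: (boolP (r ^ k <= Y0 i)%N) => H //.
  by rewrite (rsome _ H).
have cntQ : \sum_(i < n) ((r ^ k <= Y0 i)%N%:R : R) = n%:R - (r ^ k)%:R.
  rewrite (re (fun j : 'I_n => ((r ^ k <= j)%N%:R : R))).
  rewrite -(@sum_ltR R n _ rkn) (_ : n%:R = \sum_(j < n) (1 : R)); last by rewrite sumr_const card_ord.
  rewrite -sumrB.
  apply: eq_bigr => j _; rewrite leqNgt; case: (j < r ^ k)%N => /=; by rewrite ?subrr ?subr0.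
have avg := @opt_avg n R v.
have root := @root_bound R n k r k1 (_ : (n < (2 * r.+1) ^ k)%N).
have {root} root : n%:R `^ (k%:R)^-1 < (2 * r.+1)%:R :> R.
  apply: root; apply: leq_trans Hrn _; rewrite expnMn leq_mul2r; apply/orP; right.
  by rewrite -{1}(expn1 2) leq_pexp2l.
exists v.
have outE2 : output A (fun _ => 1%g) v = Y0 by exact: outE.
rewrite outE2 wel -natr1.
move: sumv avg root; rewrite cntQ natrM -natr1 => sumv avg root.
have kR : 1 <= (k%:R : R) by rewrite ler1n.
have rR : 1 <= (r%:R : R) by rewrite ler1n.
have nR : 2 * (r ^ k)%:R <= (n%:R : R) by rewrite -natrM ler_nat.
have a0 : 0 <= n%:R `^ (k%:R)^-1 :> R by rewrite powR_ge0.
have Kt : k%:R * (k%:R)^-1 = 1 :> R by rewrite mulfV // gt_eqF // ltr0n.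
have t0 : 0 < (k%:R : R)^-1 by rewrite invr_gt0 ltr0n.
have t1 : (k%:R : R)^-1 <= 1.
  have ku : (k%:R : R) \is a GRing.unit by rewrite unitfE pnatr_eq0 -lt0n.
  by rewrite invr_le1 // ?ltr0n // ler1n.
move: sumv avg root kR rR nR a0 Kt t0 t1.
set O := opt v; set a := _ `^ _; set K := (k%:R : R); set rr := (r%:R : R);
set N := (n%:R : R); set X := ((r ^ k)%:R : R); set S := \sum_(i < n) _.
move=> sumv avg root kR rR nR a0 Kt t0 t1.
have OK : K + 1 + (rr - 1) / 2 <= O.
  have N0 : 0 < N by rewrite ltr0n; lia.
  rewrite -(ler_pM2l N0).
  have h1 : (rr - 1) * (N / 2) <= (rr - 1) * (N - X).
    apply: ler_wpM2l; lra.
  have h2 : N * (K + 1 + (rr - 1) / 2) = N * (K + 1) + (rr - 1) * (N / 2).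
    ring.
  lra.
move: root; rewrite -[r.+1%:R]natr1 -/rr => root.
have e1 : a * (K^-1 * (K + 1)) = a + a * K^-1.
  by rewrite mulrDr mulr1 mulrC in Kt *; rewrite mulrDr Kt mulr1 mulrC.
have e2 : a * K^-1 <= a by rewrite ler_piMr.
split => //.
  lra.
rewrite -!mulrA e1 mul1r.
move: e2; set b := a / K => e2.
clearbody O a b; clear e1 Kt.
rewrite mulrC natr1 ler_pdivrMr; last by rewrite ltr0n.
lra.
Qed.
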